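(* Let ${}_{\mathfrak Y}\mathfrak B_{\mathfrak X}$ be a left-fibrant graph of bisets, and let $\dagger$ be a vertex of $\mathfrak Y$ and $*$ a vertex of $\mathfrak X$. Then the natural map \[\bigsqcup_{z\in\rho^{-1}( * )}\pi_1(\mathfrak Y,\dagger,\lambda(z))\otimes_{G_{\lambda(z)}}B_z\longrightarrow\pi_1(\mathfrak B,\dagger,* ),\qquad q\otimes b\mapsto q\otimes b\otimes 1,\] is a bijection (an isomorphism of left $\pi_1(\mathfrak Y,\dagger)$-sets); thus $\pi_1(\mathfrak B,\dagger,* )$ is described by the left-hand side, with the right action of $\pi_1(\mathfrak X,* )$ given by lifting of paths.
   Context: Graphs and graphs of groups. A graph is a set $\mathfrak X=V\sqcup E$ with maps $x\mapsto x^-$, $x\mapsto\bar x$ such that $\bar{\bar x}=x$, $x^-\in V$, and $x=x^-\iff x=\bar x\iff x\in V$; set $x^+=(\bar x)^-$. A graph morphism commutes with $\bar{\ }$ and $^-$ (it may send edges to vertices); it is simplicial if it sends edges to edges. A graph of groups is a connected graph with a group $G_x$ for each $x$ and homomorphisms $g\mapsto g^-\colon G_x\to G_{x^-}$, $g\mapsto\bar g\colon G_x\to G_{\bar x}$, such that $G_x\to G_{\bar x}\to G_x$ is the identity and both maps are the identity when $x\in V$; $g^+=(\bar g)^-$. Its fundamental groupoid $\pi_1(\mathfrak X)$ has object set $V$ and is generated by the $x\in\mathfrak X$ (morphisms from $x^-$ to $x^+$) and the elements of the $G_v$, subject to the relations of the $G_v$, $v=1\in G_v$, $x\bar x=1$,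 $g^-x=xg^+$ ($g\in G_x$). $\pi_1(\mathfrak X,v,w)$ is the set of morphisms from $v$ to $w$; $\pi_1(\mathfrak X,v)=\pi_1(\mathfrak X,v,v)$. Graphs of bisets. A congruence of bisets with respect to homomorphisms $\psi,\phi$ is a map $\beta$ with $(hbg)^\beta=h^\psi b^\beta g^\phi$. For graphs of groups $\mathfrak Y,\mathfrak X$, a $\mathfrak Y$-$\mathfrak X$ graph of bisets is a (not necessarily connected) graph $\mathfrak B$ with graph morphisms $\lambda\colon\mathfrak B\to\mathfrak Y$, $\rho\colon\mathfrak B\to\mathfrak X$, a $G_{\lambda(z)}$-$G_{\rho(z)}$-biset $B_z$ for each $z$, and maps $b\mapsto b^-\colon B_z\to B_{z^-}$, $b\mapsto\bar b\colon B_z\to B_{\bar z}$ that are congruences w.r.t. the corresponding group homomorphisms, with $B_z\to B_{\bar z}\to B_z$ the identity and both maps the identity for vertices; $b^+=(\bar b)^-$. The fundamental biset $\pi_1(\mathfrak B,\dagger,* )$ is the $\pi_1(\mathfrak Y,\dagger)$-$\pi_1(\mathfrak X,* )$-biset $\bigsqcup_{z\in V(\mathfrak B)}\pi_1(\mathfrak Y,\dagger,\lambda(z))\otimes_{G_{\lambda(z)}}B_z\otimes_{G_{\rho(z)}}\pi_1(\mathfrak X,\rho(z),* )$ modulo $q\otimes b^-\otimes p=q\lambda(z)\otimes b^+\otimes\overline{\rho(z)}p$ for edges $z\in\mathfrak B$, $b\in B_z$, $q\in\pi_1(\mathfrak Y,\dagger,\lambda(z)^-)$, $p\in\pi_1(\mathfrak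 X,\rho(z)^-,* )$ ($\lambda(z),\overline{\rho(z)}$ read as groupoid morphisms, trivial if vertices). Left-fibrant: $\rho$ is simplicial, and for every vertex $v\in\mathfrak B$ and every edge $f\in\mathfrak X$ with $f^-=\rho(v)$ the map $\bigsqcup_{e\in\rho^{-1}(f),\,e^-=v}G_{\lambda(v)}\otimes_{G_{\lambda(e)}}B_e\to B_v$, $g\otimes b\mapsto gb^-$, is an isomorphism of $G_{\lambda(v)}$-$G_f$-bisets ($G_{\lambda(e)}$ acting on $G_{\lambda(v)}$ through $G_{\lambda(e)}\to G_{\lambda(e)^-}=G_{\lambda(v)}$, and $G_f$ acting on $B_v$ through $G_f\to G_{\rho(v)}$). *)

(* Defs.v *)
(* Graphs of groups and graphs of bisets, encoded "fibrewise":
   all vertex/edge groups of a graph of groups live in one type [ge] with an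
   index map [gidx] (the group G_x is the fibre over x), and likewise all the
   bisets B_z live in one type with index map [bidx].  This avoids dependent
   transports along the propositional equalities  x^{--} = x  etc. *)
From Stdlib Require Import List Relations.
Import ListNotations.
Set Implicit Arguments.

Record Graph := {
  gcar :> Type;
  gbar : gcar -> gcar;
  gsrc : gcar -> gcar;
  gbarK : forall x, gbar (gbar x) = x;
  gsrc_V : forall x, gsrc (gsrc x) = gsrc x;      (* x^- is a vertex *)
  gV_bar : forall x, gsrc x = x <-> gbar x = x
}.

Definition isV (G : Graph) (x : G) : Prop := gsrc G x = x.
Definition gtgt (G : Graph) (x : G) : G := gsrc G (gbar G x).
Arguments isV {G} x.
Arguments gtgt {G} x.

Definition graph_morphism (A B : Graph) (f : A -> B) : Prop :=
  (forall z, f (gbar A z) = gbar B (f z)) /\ (forall z, f (gsrc A z) = gsrc B (f z)).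

Arguments graph_morphism {A B} f.

Definition simplicial (A B : Graph) (f : A -> B) : Prop :=
  forall z : A, ~ isV z -> ~ isV (f z).

Arguments simplicial {A B} f.

Fixpoint edge_path (G : Graph) (v : G) (l : list G) (w : G) : Prop :=
  match l with
  | [] => v = w
  | x :: l' => gsrc G x = v /\ edge_path G (gtgt x) l' w
  end.

Definition connected (G : Graph) : Prop :=
  forall v w : G, isV v -> isV w -> exists l, edge_path G v l w.

Record GoG := {
  ggr :> Graph;
  ge : Type;                           (* disjoint union of all G_x *)
  gidx : ge -> ggr;
  gone : ggr -> ge;
  gmul : ge -> ge -> ge;
  ginv : ge -> ge;
  gidx_one : forall x, gidx (gone x) = x;
  gidx_mul : forall g h, gidx g = gidx h -> gidx (gmul g h) = gidx g;
  gidx_inv : forall g, gidx (ginv g) = gidx g;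
  gmulA : forall g h k, gidx g = gidx h -> gidx h = gidx k ->
            gmul g (gmul h k) = gmul (gmul g h) k;
  gmul1g : forall g, gmul (gone (gidx g)) g = g;
  gmulg1 : forall g, gmul g (gone (gidx g)) = g;
  gmulVg : forall g, gmul (ginv g) g = gone (gidx g);
  gdown : ge -> ge;
  gidx_down : forall g, gidx (gdown g) = gsrc ggr (gidx g);
  gdownM : forall g h, gidx g = gidx h -> gdown (gmul g h) = gmul (gdown g) (gdown h);
  gbarG : ge -> ge;
  gidx_bar : forall g, gidx (gbarG g) = gbar ggr (gidx g);
  gbarM : forall g h, gidx g = gidx h -> gbarG (gmul g h) = gmul (gbarG g) (gbarG h);
  gbarGK : forall g, gbarG (gbarG g) = g;
  gV_id : forall g, isV (gidx g) -> gdown g = g /\ gbarG g = g;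
  gconn : connected ggr
}.

Arguments gidx {_} _.
Arguments gmul {_} _ _.
Arguments ginv {_} _.
Arguments gdown {_} _.
Arguments gbarG {_} _.

Section Groupoid.
Variable X : GoG.

Inductive letter := LEdge (x : X) | LElt (g : ge X).

(* well-formed word = morphism from v to w *)
Fixpoint wf (v : X) (l : list letter) (w : X) : Prop :=
  match l with
  | [] => v = w /\ isV v
  | LEdge x :: l' => gsrc X x = v /\ wf (gtgt x) l' w
  | LElt g :: l' => gidx g = v /\ isV v /\ wf v l' w
  end.

Inductive basic : list letter -> list letter -> Prop :=
| b_mul g h : gidx g = gidx h -> isV (gidx g) ->
    basic [LElt g; LElt h] [LElt (gmul g h)]
| b_one v : isV v -> basic [LElt (gone X v)] []
| b_vert v : isV v -> basic [LEdge v] []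
| b_bar x : basic [LEdge x; LEdge (gbar X x)] []
| b_slide g : basic [LElt (gdown g); LEdge (gidx g)]
                    [LEdge (gidx g); LElt (gdown (gbarG g))].

Definition pstep (v w : X) (u u' : list letter) : Prop :=
  wf v u w /\ wf v u' w /\
  exists a b l r, basic l r /\ u = a ++ l ++ b /\ u' = a ++ r ++ b.

(* equality of morphisms v -> w in pi_1(X) *)
Definition peq (v w : X) : relation (list letter) :=
  clos_refl_sym_trans _ (pstep v w).
End Groupoid.

Arguments LEdge {X} x.
Arguments LElt {X} g.

Record GoB (Y X : GoG) := {
  bgr :> Graph;
  blam : bgr -> Y;
  brho : bgr -> X;
  blam_mor : graph_morphism blam;
  brho_mor : graph_morphism brho;
  be : Type;                           (* disjoint union of all B_z *)
  bidx : be -> bgr;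
  lact : ge Y -> be -> be;
  ract : be -> ge X -> be;
  bidx_lact : forall h b, gidx h = blam (bidx b) -> bidx (lact h b) = bidx b;
  bidx_ract : forall b g, gidx g = brho (bidx b) -> bidx (ract b g) = bidx b;
  lact1 : forall b, lact (gone Y (blam (bidx b))) b = b;
  lactM : forall h h' b, gidx h = blam (bidx b) -> gidx h' = blam (bidx b) ->
            lact (gmul h h') b = lact h (lact h' b);
  ract1 : forall b, ract b (gone X (brho (bidx b))) = b;
  ractM : forall b g g', gidx g = brho (bidx b) -> gidx g' = brho (bidx b) ->
            ract b (gmul g g') = ract (ract b g) g';
  lract : forall h b g, gidx h = blam (bidx b) -> gidx g = brho (bidx b) ->
            lact h (ract b g) = ract (lact h b) g;
  bdown : be -> be;
  bbar : be -> be;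
  bidx_down : forall b, bidx (bdown b) = gsrc bgr (bidx b);
  bidx_bar : forall b, bidx (bbar b) = gbar bgr (bidx b);
  bdown_cong : forall h b g, gidx h = blam (bidx b) -> gidx g = brho (bidx b) ->
     bdown (lact h (ract b g)) = lact (gdown h) (ract (bdown b) (gdown g));
  bbar_cong : forall h b g, gidx h = blam (bidx b) -> gidx g = brho (bidx b) ->
     bbar (lact h (ract b g)) = lact (gbarG h) (ract (bbar b) (gbarG g));
  bbarK : forall b, bbar (bbar b) = b;
  bV_id : forall b, isV (bidx b) -> bdown b = b /\ bbar b = b
}.

Arguments bidx {_ _ _} _.
Arguments lact {_ _ _} _ _.
Arguments ract {_ _ _} _ _.
Arguments bdown {_ _ _} _.
Arguments bbar {_ _ _} _.

Section Bisets.
Variables (Y X : GoG) (B : GoB Y X).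

(* elements g (x) b of  G_lam(v) (x)_{G_lam(e)} B_e,  e in rho^-1(f), e^- = v *)
Definition lf_valid (v : B) (f : X) (gb : ge Y * be B) : Prop :=
  gidx (fst gb) = blam B v /\ brho B (bidx (snd gb)) = f /\
  gsrc B (bidx (snd gb)) = v.

Inductive lf_rel : ge Y * be B -> ge Y * be B -> Prop :=
| lf_tens g h b : gidx h = blam B (bidx b) ->
    lf_rel (gmul g (gdown h), b) (g, lact h b).

Definition lf_eq (v : B) (f : X) : relation (ge Y * be B) :=
  clos_refl_sym_trans _ (fun s t => lf_valid v f s /\ lf_valid v f t /\ lf_rel s t).

Definition lf_map (gb : ge Y * be B) : be B := lact (fst gb) (bdown (snd gb)).

Definition left_fibrant : Prop :=
  simplicial (brho B) /\
  forall (v : B) (f : X), isV v -> ~ isV f -> gsrc X f = brho B v ->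
    (forall c, bidx c = v -> exists gb, lf_valid v f gb /\ lf_map gb = c) /\
    (forall gb gb', lf_valid v f gb -> lf_valid v f gb' ->
       (lf_map gb = lf_map gb' <-> lf_eq v f gb gb')).

(* ---- the fundamental biset pi_1(B, dag, star) ---- *)
Definition triple : Type := (list (letter Y) * be B * list (letter X))%type.

Definition wf3 (dag : Y) (star : X) (t : triple) : Prop :=
  let '(q, b, p) := t in
  isV (bidx b) /\ wf dag q (blam B (bidx b)) /\ wf (brho B (bidx b)) p star.

Inductive trel (dag : Y) (star : X) : triple -> triple -> Prop :=
| t_left q q' b p : peq dag (blam B (bidx b)) q q' -> trel dag star (q, b, p) (q', b, p)
| t_right q b p p' : peq (brho B (bidx b)) star p p' -> trel dag star (q, b, p) (q, b, p')
| t_lact q h b p : gidx h = blam B (bidx b) ->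
    trel dag star (q ++ [LElt h], b, p) (q, lact h b, p)
| t_ract q b g p : gidx g = brho B (bidx b) ->
    trel dag star (q, ract b g, p) (q, b, LElt g :: p)
| t_edge q b p : ~ isV (bidx b) ->
    trel dag star (q, bdown b, p)
      (q ++ [LEdge (blam B (bidx b))], bdown (bbar b),
       LEdge (gbar X (brho B (bidx b))) :: p).

Definition teq (dag : Y) (star : X) : relation triple :=
  clos_refl_sym_trans _
    (fun s t => wf3 dag star s /\ wf3 dag star t /\ trel dag star s t).

(* ---- the left-hand side  \bigsqcup_{z in rho^-1(star)} pi_1(Y,dag,lam z) (x) B_z ---- *)
Definition wf2 (dag : Y) (star : X) (s : list (letter Y) * be B) : Prop :=
  isV (bidx (snd s)) /\ brho B (bidx (snd s)) = star /\
  wf dag (fst s) (blam B (bidx (snd s))).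

Inductive srel (dag : Y) : list (letter Y) * be B -> list (letter Y) * be B -> Prop :=
| s_left q q' b : peq dag (blam B (bidx b)) q q' -> srel dag (q, b) (q', b)
| s_lact q h b : gidx h = blam B (bidx b) -> srel dag (q ++ [LElt h], b) (q, lact h b).

Definition seq2 (dag : Y) (star : X) : relation (list (letter Y) * be B) :=
  clos_refl_sym_trans _
    (fun s t => wf2 dag star s /\ wf2 dag star t /\ srel dag s t).

Definition natmap (s : list (letter Y) * be B) : triple := (fst s, snd s, []).
End Bisets.

Arguments wf3 {Y X} B dag star t.
Arguments teq {Y X} B dag star _ _.
Arguments trel {Y X} B dag star _ _.

(* Main.v *)
Require Import Defs.
From Stdlib Require Import List Relations Classical.
Import ListNotations.

Lemma crst_wf A (W : A -> Prop) (r : A -> A -> Prop) x y :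
  clos_refl_sym_trans A (fun s t => W s /\ W t /\ r s t) x y -> (W x <-> W y).
Proof. induction 1; intuition. Qed.

Lemma crst_sub A (r r' : A -> A -> Prop) x y :
  (forall a b, r a b -> clos_refl_sym_trans A r' a b) ->
  clos_refl_sym_trans A r x y -> clos_refl_sym_trans A r' x y.
Proof. intros H; induction 1; eauto using rst_refl, rst_sym, rst_trans. Qed.

Section G.
Variable G : Graph.
Lemma src_isV (x : G) : isV (gsrc G x). Proof. apply gsrc_V. Qed.
Lemma tgt_isV (x : G) : isV (gtgt x). Proof. apply gsrc_V. Qed.
Lemma isV_bar (x : G) : isV x -> gbar G x = x. Proof. apply gV_bar. Qed.
Lemma isV_of_bar (x : G) : isV (gbar G x) -> isV x.
Proof. intro H. apply gV_bar in H. rewrite gbarK in H. apply gV_bar. auto. Qed.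
Lemma tgt_vertex (x : G) : isV x -> gtgt x = x.
Proof. intro H. unfold gtgt. rewrite isV_bar by auto. exact H. Qed.
End G.

Lemma mor_isV (A C : Graph) (f : A -> C) : graph_morphism f -> forall x, isV x -> isV (f x).
Proof. intros [Hb Hs] x H. unfold isV in *. rewrite <- Hs, H. reflexivity. Qed.
Lemma mor_tgt (A C : Graph) (f : A -> C) : graph_morphism f -> forall x, f (gtgt x) = gtgt (f x).
Proof. intros [Hb Hs] x. unfold gtgt. rewrite Hs, Hb. reflexivity. Qed.

Section W.
Variable Z : GoG.
Lemma wf_end (v w : Z) l : wf v l w -> isV w.
Proof.
  revert v; induction l as [|[x|g] l IH]; simpl; intros v H.
  - destruct H as [-> H]; auto.
  - destruct H as [_ H]; eauto.
  - destruct H as [_ [_ H]]; eauto.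
Qed.
Lemma wf_start (v w : Z) l : wf v l w -> isV v.
Proof.
  destruct l as [|[x|g] l]; simpl; intros H.
  - tauto.
  - destruct H as [<- _]. apply src_isV.
  - tauto.
Qed.
Lemma wf_app (v u w : Z) a c : wf v a u -> wf u c w -> wf v (a ++ c) w.
Proof.
  revert v; induction a as [|[x|g] a IH]; simpl; intros v H1 H2.
  - destruct H1 as [-> _]; auto.
  - destruct H1 as [? H1]; split; eauto.
  - destruct H1 as [? [? H1]]; repeat split; eauto.
Qed.
Lemma wf_app_inv (v w : Z) a c : wf v (a ++ c) w -> exists u, wf v a u /\ wf u c w.
Proof.
  revert v; induction a as [|[x|g] a IH]; simpl; intros v H.
  - exists v. split; [split; auto; eapply wf_start; eauto | auto].
  - destruct H as [? H]. destruct (IH _ H) as [u [? ?]]. exists u; auto.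
  - destruct H as [? [? H]]. destruct (IH _ H) as [u [? ?]]. exists u; auto.
Qed.

Lemma peq_ctx (v w : Z) l l' : peq v w l l' ->
  forall u z a c, wf u a v -> wf w c z -> peq u z (a ++ l ++ c) (a ++ l' ++ c).
Proof.
  induction 1 as [l l' [H1 [H2 [a' [b' [l0 [r0 [Hb [-> ->]]]]]]]]| |? ? ? IH|? ? ? ? IH1 ? IH2]; intros u z0 a c Ha Hc.
  - apply rst_step. split; [|split].
    + eapply wf_app; [exact Ha|]. eapply wf_app; [exact H1|exact Hc].
    + eapply wf_app; [exact Ha|]. eapply wf_app; [exact H2|exact Hc].
    + exists (a ++ a'), (b' ++ c), l0, r0. split; auto.
      rewrite !app_assoc. split; reflexivity.
  - apply rst_refl.
  - apply rst_sym. exact (IH _ _ _ _ Ha Hc).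
  - eapply rst_trans; [exact (IH1 _ _ _ _ Ha Hc)|exact (IH2 _ _ _ _ Ha Hc)].
Qed.

Lemma peq_basic (v w : Z) l r : basic l r -> wf v l w -> wf v r w -> peq v w l r.
Proof.
  intros Hb H1 H2. apply rst_step. split; [|split]; auto.
  exists [], [], l, r. rewrite !app_nil_r. auto.
Qed.

Lemma peq_wf (v w : Z) l l' : peq v w l l' -> (wf v l w <-> wf v l' w).
Proof. induction 1 as [? ? [? [? _]]| | |]; intuition. Qed.

Lemma hom_one (phi : ge Z -> ge Z) (F : Z -> Z) :
  (forall g, gidx (phi g) = F (gidx g)) ->
  (forall g h, gidx g = gidx h -> phi (gmul g h) = gmul (phi g) (phi h)) ->
  forall x, phi (gone Z x) = gone Z (F x).
Proof.
  intros Hi Hm x.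
  set (a := phi (gone Z x)).
  assert (Ha : gidx a = F x) by (unfold a; rewrite Hi, gidx_one; auto).
  assert (Haa : gmul a a = a).
  { unfold a. rewrite <- Hm by auto.
    pose proof (gmul1g Z (gone Z x)) as E. rewrite gidx_one in E. rewrite E. auto. }
  assert (E : gmul (ginv a) (gmul a a) = gmul (gmul (ginv a) a) a)
    by (apply gmulA; rewrite ?gidx_inv; auto).
  rewrite Haa, gmulVg, gmul1g in E.
  rewrite <- Ha. symmetry; exact E.
Qed.
End W.

Lemma gdown_one (Z : GoG) x : gdown (gone Z x) = gone Z (gsrc Z x).
Proof. apply (hom_one Z gdown (gsrc Z)). apply gidx_down. apply gdownM. Qed.
Lemma gbar_one (Z : GoG) x : gbarG (gone Z x) = gone Z (gbar Z x).
Proof. apply (hom_one Z gbarG (gbar Z)). apply gidx_bar. apply gbarM. Qed.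
Lemma gV_down (Z : GoG) (g : ge Z) : isV (gidx g) -> gdown g = g.
Proof. intro H. apply (gV_id Z g H). Qed.
Lemma gV_barG (Z : GoG) (g : ge Z) : isV (gidx g) -> gbarG g = g.
Proof. intro H. apply (gV_id Z g H). Qed.

Section Bis.
Variables (Y X : GoG) (B : GoB Y X).
Notation lam := (blam B).
Notation rho := (brho B).

Lemma lam_src z : lam (gsrc B z) = gsrc Y (lam z). Proof. apply (proj2 (blam_mor B)). Qed.
Lemma lam_bar z : lam (gbar B z) = gbar Y (lam z). Proof. apply (proj1 (blam_mor B)). Qed.
Lemma rho_src z : rho (gsrc B z) = gsrc X (rho z). Proof. apply (proj2 (brho_mor B)). Qed.
Lemma rho_bar z : rho (gbar B z) = gbar X (rho z). Proof. apply (proj1 (brho_mor B)). Qed.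

Lemma lact1' h b : h = gone Y (lam (bidx b)) -> lact h b = b.
Proof. intros ->. apply lact1. Qed.
Lemma ract1' b g : g = gone X (rho (bidx b)) -> ract b g = b.
Proof. intros ->. apply ract1. Qed.

Lemma bdown_ract b g : gidx g = rho (bidx b) -> bdown (ract b g) = ract (bdown b) (gdown g).
Proof.
  intros Hg.
  pose proof (bdown_cong B (gone Y (lam (bidx b))) b g (gidx_one _ _) Hg) as H.
  rewrite (lact1' (gone Y (lam (bidx b))) (ract b g)) in H by (rewrite bidx_ract; auto).
  rewrite H, gdown_one. apply lact1'.
  rewrite bidx_ract, bidx_down, lam_src; auto.
  rewrite gidx_down, bidx_down, rho_src, Hg; auto.
Qed.

Lemma bdown_lact h b : gidx h = lam (bidx b) -> bdown (lact h b) = lact (gdown h) (bdown b).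
Proof.
  intros Hh.
  pose proof (bdown_cong B h b (gone X (rho (bidx b))) Hh (gidx_one _ _)) as H.
  rewrite ract1, gdown_one in H. rewrite H.
  rewrite ract1'; auto. rewrite bidx_down, rho_src; auto.
Qed.

Lemma bbar_ract b g : gidx g = rho (bidx b) -> bbar (ract b g) = ract (bbar b) (gbarG g).
Proof.
  intros Hg.
  pose proof (bbar_cong B (gone Y (lam (bidx b))) b g (gidx_one _ _) Hg) as H.
  rewrite (lact1' (gone Y (lam (bidx b))) (ract b g)) in H by (rewrite bidx_ract; auto).
  rewrite H, gbar_one. apply lact1'.
  rewrite bidx_ract, bidx_bar, lam_bar; auto.
  rewrite gidx_bar, bidx_bar, rho_bar, Hg; auto.
Qed.

Lemma bbar_lact h b : gidx h = lam (bidx b) -> bbar (lact h b) = lact (gbarG h) (bbar b).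
Proof.
  intros Hh.
  pose proof (bbar_cong B h b (gone X (rho (bidx b))) Hh (gidx_one _ _)) as H.
  rewrite ract1, gbar_one in H. rewrite H.
  rewrite ract1'; auto. rewrite bidx_bar, rho_bar; auto.
Qed.

Lemma bplus_lact h b : gidx h = lam (bidx b) ->
  bdown (bbar (lact h b)) = lact (gdown (gbarG h)) (bdown (bbar b)).
Proof.
  intros Hh. rewrite bbar_lact, bdown_lact; auto.
  rewrite gidx_bar, bidx_bar, lam_bar, Hh; auto.
Qed.

Lemma bplus_ract b g : gidx g = rho (bidx b) ->
  bdown (bbar (ract b g)) = ract (bdown (bbar b)) (gdown (gbarG g)).
Proof.
  intros Hg. rewrite bbar_ract, bdown_ract; auto.
  rewrite gidx_bar, bidx_bar, rho_bar, Hg; auto.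
Qed.
End Bis.

Section Main.
Variables (Y X : GoG) (B : GoB Y X) (dag : Y).
Hypothesis LF : left_fibrant B.
Notation lam := (blam B).
Notation rho := (brho B).

Definition pr : Type := (list (letter Y) * be B)%type.
Definition W2 (v : X) (s : pr) := wf2 B dag v s.
Definition E (v : X) := seq2 B dag v.

Lemma E_refl v s : E v s s. Proof. apply rst_refl. Qed.
Lemma E_sym v s t : E v s t -> E v t s. Proof. apply rst_sym. Qed.
Lemma E_trans v s t u : E v s t -> E v t u -> E v s u. Proof. apply rst_trans. Qed.
Lemma E_step v s t : W2 v s -> W2 v t -> srel B dag s t -> E v s t.
Proof. intros; apply rst_step; auto. Qed.
Lemma E_W2 v s t : E v s t -> W2 v s -> W2 v t.
Proof. intros H; apply (crst_wf _ _ _ _ _ H). Qed.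
Lemma E_W2' v s t : E v s t -> W2 v t -> W2 v s.
Proof. intros H; apply (crst_wf _ _ _ _ _ H). Qed.

Lemma W2_isV v s : W2 v s -> isV v.
Proof. intros [H1 [H2 _]]. rewrite <- H2. apply mor_isV; auto. apply brho_mor. Qed.

Lemma decomp v q b x : W2 v (q, b) -> ~ isV x -> gsrc X x = v ->
  exists d, lf_valid B (bidx b) x d /\ lf_map B d = b.
Proof.
  intros [H1 [H2 H3]] Hx Hs. simpl in *.
  destruct LF as [_ HLF].
  destruct (HLF (bidx b) x H1 Hx (eq_trans Hs (eq_sym H2))) as [Hsurj _].
  apply Hsurj; auto.
Qed.

Lemma decomp_eq (v : B) x d d' : isV v -> ~ isV x -> gsrc X x = rho v ->
  lf_valid B v x d -> lf_valid B v x d' -> lf_map B d = lf_map B d' -> lf_eq B v x d d'.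
Proof.
  intros H1 Hx Hs H2 H3 H4. destruct LF as [_ HLF].
  destruct (HLF v x H1 Hx Hs) as [_ Hinj]. apply Hinj; auto.
Qed.

Definition lift (q : list (letter Y)) (d : ge Y * be B) : pr :=
  (q ++ [LElt (fst d); LEdge (lam (bidx (snd d)))], bdown (bbar (snd d))).

Lemma lift_W2 (v : B) x q d : lf_valid B v x d -> isV v -> wf dag q (lam v) ->
  W2 (gtgt x) (lift q d).
Proof.
  destruct d as [h e]. intros [Hh [Hx Hv]] HV Hq. simpl in *.
  unfold W2, wf2, lift; simpl. split; [|split].
  - rewrite bidx_down. apply src_isV.
  - rewrite bidx_down, bidx_bar, rho_src, rho_bar, Hx. reflexivity.
  - apply wf_app with (lam v); auto. simpl. split; [auto|split; [|split; [|split]]].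
    + apply mor_isV; auto. apply blam_mor.
    + rewrite <- lam_src, Hv. reflexivity.
    + rewrite bidx_down, bidx_bar, lam_src, lam_bar. reflexivity.
    + apply tgt_isV.
Qed.


Lemma W2_lact_fw v q k b : W2 v (q ++ [LElt k], b) -> gidx k = lam (bidx b) -> W2 v (q, lact k b).
Proof.
  intros [H1 [H2 H3]] Hk. simpl in *. unfold W2, wf2; simpl.
  rewrite bidx_lact by auto. split; auto. split; auto.
  apply wf_app_inv in H3. destruct H3 as [u [Hq Hk']]. simpl in Hk'.
  destruct Hk' as [Hk1 [Hk2 [Hk3 _]]]. congruence.
Qed.

Lemma W2_lact_bw v q k b : W2 v (q, lact k b) -> gidx k = lam (bidx b) -> W2 v (q ++ [LElt k], b).
Proof.
  intros [H1 [H2 H3]] Hk. simpl in *. unfold W2, wf2; simpl.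
  rewrite bidx_lact in * by auto. split; auto. split; auto.
  apply wf_app with (lam (bidx b)); auto. simpl. split; auto.
  assert (isV (lam (bidx b))) by (apply mor_isV; auto; apply blam_mor). tauto.
Qed.

Lemma E_lact v q k b : W2 v (q ++ [LElt k], b) -> gidx k = lam (bidx b) ->
  E v (q ++ [LElt k], b) (q, lact k b).
Proof.
  intros H Hk. apply E_step; auto. apply W2_lact_fw; auto. constructor; auto.
Qed.

Lemma E_left v q q' b : W2 v (q, b) -> peq dag (lam (bidx b)) q q' -> E v (q, b) (q', b).
Proof.
  intros H Hp. apply E_step; auto.
  - destruct H as [H1 [H2 H3]]. split; auto. split; auto. simpl in *.
    apply (peq_wf _ _ _ _ _ Hp); auto.
  - constructor; auto.
Qed.

Lemma peq_ctx' (Z : GoG) (v w u z : Z) l l' a c :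
  peq v w l l' -> wf u a v -> wf w c z -> peq u z (a ++ l ++ c) (a ++ l' ++ c).
Proof. intros; eapply peq_ctx; eauto. Qed.

Lemma lamV (z : B) : isV z -> isV (lam z).
Proof. apply mor_isV, blam_mor. Qed.
Lemma rhoV (z : B) : isV z -> isV (rho z).
Proof. apply mor_isV, brho_mor. Qed.

Lemma lift_indep (v : B) x q d d' : isV v -> wf dag q (lam v) -> lf_eq B v x d d' ->
  lf_valid B v x d -> E (gtgt x) (lift q d) (lift q d').
Proof.
  intros HV Hq H. induction H as [s t [Hs [Ht Hr]]| s | s t H IH | s t u H1 IH1 H2 IH2]; intros Hd.
  - destruct Hr as [g h e Hh].
    destruct Hs as [Hs1 [Hs2 Hs3]]; destruct Ht as [Ht1 [Ht2 Ht3]]; simpl in *.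
    unfold lift; simpl. rewrite bidx_lact in * by auto. rewrite bplus_lact by auto.
    set (le := lam (bidx e)). set (k := gdown (gbarG h)). set (bp := bdown (bbar e)).
    assert (Hdh : gidx (gdown h) = lam v) by (rewrite gidx_down, Hh, <- lam_src, Hs3; auto).
    assert (Hk : gidx k = lam (bidx bp)).
    { unfold k, bp. rewrite gidx_down, gidx_bar, bidx_down, bidx_bar, lam_src, lam_bar, Hh; auto. }
    assert (HlV : isV (lam v)) by (apply lamV; auto).
    assert (Hle : gsrc Y le = lam v) by (unfold le; rewrite <- lam_src, Hs3; auto).
    assert (Hlt : gtgt le = lam (bidx bp)).
    { unfold le, bp, gtgt. rewrite bidx_down, bidx_bar, lam_src, lam_bar. auto. }
    assert (HbV : isV (lam (bidx bp))) by (rewrite <- Hlt; apply tgt_isV).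
    apply E_trans with (q ++ [LElt g; LEdge le; LElt k], bp).
    + apply E_left.
      * apply (lift_W2 v x q (gmul g (gdown h), e)); auto; split; auto.
      * apply rst_trans with (q ++ [LElt g; LElt (gdown h); LEdge le]).
        -- pose proof (peq_ctx' Y (lam v) (lam v) dag (lam (bidx bp)) [LElt g; LElt (gdown h)]
              [LElt (gmul g (gdown h))] q [LEdge le]) as P.
           simpl in P. apply rst_sym, P; auto.
           ++ apply peq_basic. constructor; congruence.
              simpl; repeat split; auto; congruence.
              simpl; repeat split; auto; congruence.
           ++ simpl. rewrite Hlt. auto.
        -- pose proof (peq_ctx' Y (lam v) (lam (bidx bp)) dag (lam (bidx bp)) [LElt (gdown h); LEdge le]
              [LEdge le; LElt k] (q ++ [LElt g]) []) as P.
           rewrite app_nil_r, <- !app_assoc in P. simpl in P. apply P.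
           ++ apply peq_basic. unfold le, k. rewrite <- Hh. constructor.
              simpl; repeat split; auto; congruence.
              simpl; repeat split; auto; congruence.
           ++ apply wf_app with (lam v); auto. simpl; repeat split; auto.
           ++ simpl; auto.
    + pose proof (E_lact (gtgt x) (q ++ [LElt g; LEdge le]) k bp) as P.
      rewrite <- app_assoc in P. apply P; auto.
      rewrite app_assoc. apply W2_lact_bw; auto.
      unfold k, bp, le. rewrite <- bplus_lact by auto.
      pose proof (lift_W2 v x q (g, lact h e)) as L. unfold lift in L; simpl in L.
      rewrite bidx_lact in L by auto. apply L; auto. split; auto. simpl. rewrite bidx_lact; auto.
  - apply E_refl.
  - apply E_sym. apply IH. apply (crst_wf _ _ _ _ _ H); auto.
  - apply E_trans with (lift q t); auto. apply IH2. apply (crst_wf _ _ _ _ _ H1); auto.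
Qed.


Lemma lift_tail (v : B) x h e : lf_valid B v x (h, e) -> isV v ->
  wf (lam v) [LElt h; LEdge (lam (bidx e))] (lam (bidx (bdown (bbar e)))).
Proof.
  intros [Hh [Hx Hv]] HV. simpl in *. split; auto. split; [apply lamV; auto|].
  split; [rewrite <- lam_src, Hv; auto|]. split.
  - unfold gtgt. rewrite bidx_down, bidx_bar, lam_src, lam_bar. auto.
  - apply tgt_isV.
Qed.

Lemma W2_ract v q b g : W2 v (q, b) -> gidx g = v -> W2 v (q, ract b g).
Proof.
  intros [H1 [H2 H3]] Hg. simpl in *. assert (gidx g = rho (bidx b)) by congruence.
  unfold W2, wf2; simpl. rewrite bidx_ract by auto. auto.
Qed.

Lemma lift_compat v P P' : E v P P' -> W2 v P -> forall x, ~ isV x -> gsrc X x = v ->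
  forall d d', lf_valid B (bidx (snd P)) x d -> lf_map B d = snd P ->
  lf_valid B (bidx (snd P')) x d' -> lf_map B d' = snd P' ->
  E (gtgt x) (lift (fst P) d) (lift (fst P') d').
Proof.
  intros H. induction H as [s t [Hs [Ht Hr]]| s | s t H IH | s t u H1 IH1 H2 IH2];
    intros HW x Hx Hsx d d' Hd Hdm Hd' Hdm'.
  - destruct Hr as [q q' b Hp | q h b Hh]; simpl in *.
    + destruct Hs as [Hs1 [Hs2 Hs3]]; simpl in *.
      apply E_trans with (lift q d').
      * apply lift_indep with (bidx b); auto. apply decomp_eq; auto. congruence. congruence.
      * destruct d' as [h' e']. apply E_left.
        -- apply lift_W2 with (bidx b); auto.
        -- unfold lift; simpl.
           pose proof (peq_ctx' Y dag (lam (bidx b)) dag (lam (bidx (bdown (bbar e')))) q q' []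
              [LElt h'; LEdge (lam (bidx e'))]) as P. simpl in P. apply P; auto.
           ++ simpl. split; auto. eapply wf_start; eauto.
           ++ apply lift_tail with x; auto.
    + destruct Ht as [Ht1 [Ht2 Ht3]]; simpl in *.
      rewrite bidx_lact in * by auto.
      destruct Hs as [Hs1 [Hs2 Hs3]]; simpl in *.
      destruct d as [k e]. unfold lf_map in Hdm. simpl in Hdm.
      pose proof Hd as Hd0.
      destruct Hd as [Hk [He1 He2]]; simpl in *.
      assert (Hd'' : lf_valid B (bidx b) x (gmul h k, e)).
      { split; auto. simpl. rewrite gidx_mul; congruence. }
      assert (HVb : isV (lam (bidx b))) by (apply lamV; auto).
      apply E_trans with (lift q (gmul h k, e)).
      * apply E_left.
        -- exact (lift_W2 (bidx b) x (q ++ [LElt h]) (k, e) Hd0 Hs1 Hs3).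
        -- unfold lift; simpl.
           pose proof (peq_ctx' Y (lam (bidx b)) (lam (bidx b)) dag
              (lam (bidx (bdown (bbar e)))) [LElt h; LElt k] [LElt (gmul h k)] q
              [LEdge (lam (bidx e))]) as P. simpl in P.
           rewrite <- app_assoc. simpl. apply P; auto.
           ++ apply peq_basic. constructor; [congruence|rewrite Hh; auto].
              simpl; repeat split; auto; try congruence.
              simpl; repeat split; auto; try (rewrite gidx_mul; congruence).
           ++ pose proof (lift_tail _ x (gmul h k) e Hd'' Hs1) as T. simpl in T. tauto.
      * apply lift_indep with (bidx b); auto.
        apply decomp_eq; auto. congruence.
        rewrite Hdm'. unfold lf_map; simpl. rewrite lactM, Hdm; auto.
        rewrite bidx_down; congruence. rewrite bidx_down; congruence.
  - pose proof Hd as Hd0. destruct Hd as [Hd1 [Hd2 Hd3]]. destruct HW as [H1 [H2 H3]].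
    apply lift_indep with (bidx (snd s)); auto.
    apply decomp_eq; auto; try congruence.
  - assert (HWs : W2 v s) by (apply (proj2 (crst_wf _ _ _ _ _ H)); auto).
    apply E_sym. apply IH; auto.
  - assert (HWt : W2 v t) by (apply (proj1 (crst_wf _ _ _ _ _ H1)); auto).
    destruct t as [qt bt].
    destruct (decomp v qt bt x HWt Hx Hsx) as [dt [Hdt Hdtm]].
    apply E_trans with (lift qt dt).
    + apply IH1; auto.
    + apply IH2; auto.
Qed.

Lemma ract_compat v P P' g : E v P P' -> W2 v P -> gidx g = v ->
  E v (fst P, ract (snd P) g) (fst P', ract (snd P') g).
Proof.
  intros H. induction H as [s t [Hs [Ht Hr]]| s | s t H IH | s t u H1 IH1 H2 IH2];
    intros HW Hg.
  - destruct Hr as [q q' b Hp | q h b Hh]; simpl in *.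
    + apply E_left. apply W2_ract; auto.
      destruct Hs as [Hs1 [Hs2 Hs3]]; simpl in *. rewrite bidx_ract; congruence.
    + destruct Ht as [Ht1 [Ht2 Ht3]]; simpl in *. rewrite bidx_lact in * by auto.
      assert (Hg' : gidx g = rho (bidx b)) by congruence.
      rewrite <- lract by auto. apply E_lact.
      * apply W2_ract; auto.
      * rewrite bidx_ract; auto.
  - apply E_refl.
  - apply E_sym, IH; auto. apply (proj2 (crst_wf _ _ _ _ _ H)); auto.
  - apply E_trans with (fst t, ract (snd t) g); auto.
    apply IH2; auto. apply (proj1 (crst_wf _ _ _ _ _ H1)); auto.
Qed.


Inductive R : triple B -> pr -> Prop :=
| R_nil q b : R (q, b, []) (q, b)
| R_elt q b g p s : R (q, ract b g, p) s -> R (q, b, LElt g :: p) s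
| R_vert q b x p s : isV x -> R (q, b, p) s -> R (q, b, LEdge x :: p) s
| R_edge q b x p d s : ~ isV x -> lf_valid B (bidx b) x d -> lf_map B d = b ->
    R (lift q d, p) s -> R (q, b, LEdge x :: p) s.

Lemma vert_tgt (x v : X) : isV x -> gsrc X x = v -> gtgt x = v.
Proof. intros H1 H2. rewrite tgt_vertex by auto. unfold isV in H1. congruence. Qed.

Lemma key p : forall v w q b q' b' s s', wf v p w -> W2 v (q, b) -> E v (q, b) (q', b') ->
  R (q, b, p) s -> R (q', b', p) s' -> E w s s'.
Proof.
  induction p as [|[x|g] p IH]; intros v w q b q' b' s s' Hp HW HE HR HR'.
  - inversion HR; inversion HR'; subst. destruct Hp as [-> _]. auto.
  - destruct Hp as [Hx Hp]. subst v.
    inversion HR as [| | ? ? ? ? ? Hv1 HR1 | ? ? ? ? d ? Hv1 Hd1 Hdm1 HR1]; subst;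
    inversion HR' as [| | ? ? ? ? ? Hv2 HR2 | ? ? ? ? d' ? Hv2 Hd2 Hdm2 HR2]; subst.
    + rewrite (vert_tgt x (gsrc X x)) in Hp by auto. eapply IH; eauto.
    + contradiction.
    + contradiction.
    + eapply IH with (v := gtgt x); eauto.
      * destruct HW as [H1 [H2 H3]]; simpl in *. eapply lift_W2; eauto.
      * pose proof (lift_compat (gsrc X x) (q, lf_map B d) (q', lf_map B d') HE HW x Hv1 eq_refl d d') as L.
        simpl in L. apply L; auto.
  - destruct Hp as [Hg [HvV Hp]].
    inversion HR; inversion HR'; subst.

    apply (IH (gidx g) w q (ract b g) q' (ract b' g) s s'); auto.
    + apply W2_ract; auto.
    + apply (ract_compat (gidx g) (q, b) (q', b') g HE HW eq_refl).
Qed.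


Lemma R_nil_inv q b s : R (q, b, []) s -> s = (q, b).
Proof. intro H; inversion H; auto. Qed.
Lemma R_elt_inv q b g p s : R (q, b, LElt g :: p) s -> R (q, ract b g, p) s.
Proof. intro H; inversion H; auto. Qed.
Lemma R_vert_inv q b x p s : isV x -> R (q, b, LEdge x :: p) s -> R (q, b, p) s.
Proof. intros Hx H; inversion H; auto; contradiction. Qed.
Lemma R_edge_inv q b x p s : ~ isV x -> R (q, b, LEdge x :: p) s ->
  exists d, lf_valid B (bidx b) x d /\ lf_map B d = b /\ R (lift q d, p) s.
Proof. intros Hx H; inversion H; subst; [contradiction|eauto]. Qed.

Lemma total p : forall v w q b, wf v p w -> W2 v (q, b) -> exists s, R (q, b, p) s.
Proof.
  induction p as [|[x|g] p IH]; intros v w q b Hp HW.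
  - exists (q, b). constructor.
  - destruct Hp as [Hx Hp].
    destruct (classic (isV x)) as [Hv|Hv].
    + rewrite (vert_tgt x v) in Hp by auto.
      destruct (IH v w q b Hp HW) as [s Hs]. exists s. constructor; auto.
    + destruct (decomp v q b x HW Hv Hx) as [[h e] [Hd Hdm]].
      assert (HL : W2 (gtgt x) (lift q (h, e))).
      { destruct HW as [H1 [H2 H3]]. exact (lift_W2 _ x q (h, e) Hd H1 H3). }
      destruct (IH _ w _ _ Hp HL) as [s Hs]. exists s. apply (R_edge q b x p (h, e) s Hv Hd Hdm Hs).
  - destruct Hp as [Hg [HvV Hp]].
    destruct (IH v w q (ract b g) Hp (W2_ract v q b g HW Hg)) as [s Hs].
    exists s. constructor; auto.
Qed.


Lemma W2_E v s t : E v s t -> W2 v s -> W2 v t.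
Proof. apply E_W2. Qed.

Lemma pcore l r : basic l r -> forall a c v w q b q' b' s s',
  wf v (a ++ l ++ c) w -> W2 v (q, b) -> E v (q, b) (q', b') ->
  R (q, b, a ++ l ++ c) s -> R (q', b', a ++ r ++ c) s' -> E w s s'.
Proof.
  intros Hb a. induction a as [|[x|g] a IH]; intros c v w q b q' b' s s' H1 HW HE HR HR'.
  - simpl in *. assert (HW' : W2 v (q', b')) by (eapply W2_E; eauto).
    destruct Hb as [g h Hgh HgV | u Hu | u Hu | x | g].
    +
      destruct H1 as [Hg [HvV [Hh [_ Hc]]]].
      apply R_elt_inv, R_elt_inv in HR. apply R_elt_inv in HR'.
      destruct HW' as [Hb1 [Hb2 Hb3]]; simpl in *.
      rewrite ractM in HR' by congruence.
      apply (key c v w q (ract (ract b g) h) q' (ract (ract b' g) h) s s'); auto.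
      * apply W2_ract; auto. apply W2_ract; auto.
      * pose proof (ract_compat v (q, b) (q', b') g HE HW Hg) as E1. simpl in E1.
        apply (ract_compat v (q, ract b g) (q', ract b' g) h E1); auto.
        apply W2_ract; auto.
    +
      destruct H1 as [Hg [HvV Hc]]. rewrite gidx_one in Hg. subst u.
      apply R_elt_inv in HR. rewrite ract1' in HR.
      * apply (key c v w q b q' b' s s'); auto.
      * destruct HW as [_ [H2 _]]. simpl in H2. congruence.
    +
      destruct H1 as [Hs Hc]. rewrite (vert_tgt u v) in Hc by auto.
      apply R_vert_inv in HR; auto.
      apply (key c v w q b q' b' s s'); auto.
    +
      destruct H1 as [Hxs [_ Hc]]. subst v.
      assert (Ht : gtgt (gbar X x) = gsrc X x) by (unfold gtgt; rewrite gbarK; auto).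
      rewrite Ht in Hc.
      destruct (classic (isV x)) as [Hv|Hv].
      * apply R_vert_inv in HR; auto. apply R_vert_inv in HR; [|rewrite isV_bar; auto].
        apply (key c (gsrc X x) w q b q' b' s s'); auto.
      * destruct (R_edge_inv _ _ _ _ _ Hv HR) as [[h e] [Hd [Hdm HR1]]].
        assert (Hv' : ~ isV (gbar X x)) by (intro H; apply Hv, isV_of_bar; auto).
        destruct (R_edge_inv _ _ _ _ _ Hv' HR1) as [d2 [Hd2 [Hdm2 HR2]]].
        simpl in Hd2, Hdm2, HR2.
        pose proof Hd as Hd0. destruct Hd as [Hh [He1 He2]]; simpl in *.
        destruct HW as [HW1 [HW2 HW3]]; simpl in *.
        set (e' := bdown (bbar e)) in *.
        set (q1 := q ++ [LElt h; LEdge (lam (bidx e))]) in *.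
        assert (HL := lift_W2 _ x q (h, e) Hd0 HW1 HW3). unfold lift in HL; simpl in HL.
        fold e' q1 in HL. destruct HL as [HL1 [HL2 HL3]]; simpl in *.
        set (d0 := (gone Y (lam (bidx e')), bbar e)).
        assert (Hd0v : lf_valid B (bidx e') (gbar X x) d0).
        { unfold d0, e'.
          split; [apply gidx_one|]; simpl.
          rewrite bidx_bar, rho_bar, He1. split; auto. rewrite bidx_down, bidx_bar. auto. }
        assert (Hsrcx : gsrc X (gbar X x) = rho (bidx e')).
        { unfold e'. rewrite bidx_down, bidx_bar, rho_src, rho_bar, He1. auto. }
        assert (E1 : E (gsrc X x) (lift q1 d2) (lift q1 d0)).
        { rewrite <- Ht. apply lift_indep with (bidx e'); auto.
          apply decomp_eq; auto. rewrite Hdm2. unfold lf_map, d0; simpl.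
          symmetry. apply lact1'. auto. }
        assert (Hbe : bidx (bdown e) = gsrc B (bidx e)) by apply bidx_down.
        assert (HlbV : isV (lam (bidx e'))) by (apply lamV; auto).
        assert (E2 : E (gsrc X x) (lift q1 d0) (q ++ [LElt h], bdown e)).
        { assert (HW0 : W2 (gsrc X x) (lift q1 d0)).
          { rewrite <- Ht. apply lift_W2 with (bidx e'); auto. }
          unfold lift, d0 in *; simpl in *. rewrite bbarK in *.
          apply E_left; auto.
          apply rst_trans with (q1 ++ [LEdge (lam (bidx (bbar e)))]).
          - pose proof (peq_ctx' Y (lam (bidx e')) (lam (bidx e')) dag (lam (bidx (bdown e)))
              [LElt (gone Y (lam (bidx e')))] [] q1 [LEdge (lam (bidx (bbar e)))]) as P.
            simpl in P. apply P; [|exact HL3|].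
            + apply peq_basic. constructor; auto. simpl; rewrite gidx_one; auto. simpl; auto.
            + simpl. unfold e'. rewrite bidx_down, lam_src. split; auto. split; [|apply tgt_isV].
              rewrite <- mor_tgt by apply blam_mor. unfold gtgt.
              rewrite bidx_bar, gbarK, bidx_down. auto.
          - unfold q1. rewrite <- app_assoc. simpl.
            pose proof (peq_ctx' Y (lam (bidx b)) (lam (bidx b)) dag (lam (bidx (bdown e)))
              [LEdge (lam (bidx e)); LEdge (lam (bidx (bbar e)))] [] (q ++ [LElt h]) []) as P.
            rewrite app_nil_r, <- !app_assoc in P. simpl in P. apply P.
            + rewrite bidx_bar, lam_bar. apply peq_basic. constructor.
              simpl. rewrite <- lam_src, He2. split; auto. unfold gtgt.
              rewrite gbarK. rewrite <- lam_src, He2. split; auto. split; auto. apply lamV; auto.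
              simpl. split; auto. apply lamV; auto.
            + apply wf_app with (lam (bidx b)); auto. simpl.
              split; [auto|]. split; [apply lamV; auto|]. split; [auto|apply lamV; auto].
            + simpl. rewrite Hbe, He2. split; auto. apply lamV; auto. }
        assert (E3 : E (gsrc X x) (q ++ [LElt h], bdown e) (q, b)).
        { assert (Hb0 : lact h (bdown e) = b) by exact Hdm.
          rewrite <- Hb0. apply E_lact.
          - apply W2_lact_bw. unfold W2, wf2; simpl. rewrite Hb0. auto.
            rewrite Hbe, He2. auto.
          - rewrite Hbe, He2. auto. }
        apply (key c (gsrc X x) w (fst (lift q1 d2)) (snd (lift q1 d2)) q' b' s s'); auto.
        -- rewrite <- Ht. destruct d2 as [h2 e2]. apply lift_W2 with (bidx e'); auto.
        -- apply E_trans with (lift q1 d0); auto. apply E_trans with (q ++ [LElt h], bdown e); auto.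
           apply E_trans with (q, b); auto.
    +
      destruct H1 as [Hg1 [HvV [Hxs Hc]]]. subst v.
      rewrite gidx_down in HE, HW, HW', HvV.
      apply R_elt_inv in HR.
      destruct HW' as [HW1' [HW2' HW3']]; simpl in *.
      destruct (classic (isV (gidx g))) as [Hv|Hv].
      * rewrite (gV_barG _ g Hv) in HR'. rewrite (gV_down _ g Hv) in HR, HR'.
        apply R_vert_inv in HR; auto. apply R_vert_inv in HR'; auto. apply R_elt_inv in HR'.
        rewrite (vert_tgt (gidx g) (gsrc X (gidx g))) in Hc by auto.
        apply (key c (gsrc X (gidx g)) w q (ract b g) q' (ract b' g) s s'); auto.
        -- apply W2_ract; [exact HW | symmetry; exact Hv].
        -- apply (ract_compat _ (q, b) (q', b') g HE HW); auto.
      * destruct (R_edge_inv _ _ _ _ _ Hv HR) as [d1 [Hd1 [Hdm1 HR1]]].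
        destruct (R_edge_inv _ _ _ _ _ Hv HR') as [[k e] [Hd2 [Hdm2 HR2]]].
        simpl in HR2. apply R_elt_inv in HR2.
        pose proof Hd2 as Hd2'. destruct Hd2' as [Hk [He1 He2]]; simpl in *.
        assert (Hge : gidx g = rho (bidx e)) by auto.
        rewrite <- bplus_ract in HR2 by auto.
        assert (HR3 : R (lift q' (k, ract e g), c) s').
        { unfold lift; simpl. rewrite bidx_ract by auto. exact HR2. }
        assert (Hgd : gidx (gdown g) = rho (bidx b')) by congruence.
        assert (Hd3 : lf_valid B (bidx (ract b' (gdown g))) (gidx g) (k, ract e g)).
        { rewrite bidx_ract by auto. split; auto. simpl. rewrite !bidx_ract by auto. auto. }
        assert (Hdm3 : lf_map B (k, ract e g) = ract b' (gdown g)).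
        { unfold lf_map; simpl. rewrite bdown_ract, lract by (rewrite ?bidx_down; congruence).
          f_equal. exact Hdm2. }
        assert (HW0 : W2 (gsrc X (gidx g)) (q, ract b (gdown g))) by (apply W2_ract; auto).
        apply (key c (gtgt (gidx g)) w (fst (lift q d1)) (snd (lift q d1))
                 (fst (lift q' (k, ract e g))) (snd (lift q' (k, ract e g))) s s'); auto.
        -- destruct HW0 as [H01 [H02 H03]]; simpl in *. exact (lift_W2 _ _ q d1 Hd1 H01 H03).
        -- pose proof (lift_compat (gsrc X (gidx g)) (q, ract b (gdown g)) (q', ract b' (gdown g))
              (ract_compat _ (q, b) (q', b') (gdown g) HE HW (eq_sym Hxs)) HW0 (gidx g) Hv eq_refl
              d1 (k, ract e g) Hd1 Hdm1 Hd3 Hdm3) as L.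
           exact L.
  - simpl in H1, HR, HR'.
    destruct H1 as [Hx H1]. subst v.
    inversion HR as [| | ? ? ? ? ? Hv1 HR1 | ? ? ? ? d ? Hv1 Hd1 Hdm1 HR1]; subst.
    + apply R_vert_inv in HR'; auto. rewrite (vert_tgt x (gsrc X x)) in H1 by auto.
      apply (IH c (gsrc X x) w q b q' b' s s'); auto.
    + destruct (R_edge_inv _ _ _ _ _ Hv1 HR') as [d' [Hd' [Hdm' HR2]]].
      destruct HW as [HW1 [HW2 HW3]]; simpl in *.
      apply (IH c (gtgt x) w (fst (lift q d)) (snd (lift q d)) (fst (lift q' d')) (snd (lift q' d')) s s'); auto.
      * exact (lift_W2 _ x q d Hd1 HW1 HW3).
      * pose proof (lift_compat (gsrc X x) (q, lf_map B d) (q', b') HE) as L. simpl in L.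
        apply L; auto. split; auto.
  - simpl in H1, HR, HR'.
    destruct H1 as [Hg [HvV H1]]. subst v.
    apply R_elt_inv in HR. apply R_elt_inv in HR'.
    apply (IH c (gidx g) w q (ract b g) q' (ract b' g) s s'); auto.
    + apply W2_ract; auto.
    + apply (ract_compat (gidx g) (q, b) (q', b') g HE HW eq_refl).
Qed.


Lemma peq_resp v w p p' : peq v w p p' -> wf v p w -> forall q b s s', W2 v (q, b) ->
  R (q, b, p) s -> R (q, b, p') s' -> E w s s'.
Proof.
  intros H. induction H as [x y [Hx [Hy [a [c [l [r [Hb [-> ->]]]]]]]]| x | x y H IH | x y z H1 IH1 H2 IH2];
    intros Hp q b s s' HW HR HR'.
  - eapply pcore; eauto. apply E_refl.
  - eapply key; eauto. apply E_refl.
  - apply E_sym. eapply IH; eauto. apply (proj2 (peq_wf _ _ _ _ _ H)); auto.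
  - assert (Hy : wf v y w) by (apply (proj1 (peq_wf _ _ _ _ _ H1)); auto).
    destruct (total y v w q b Hy HW) as [sm Hsm].
    apply E_trans with sm; eauto.
Qed.

Definition T3 (w : X) := wf3 B dag w.
Definition TE (w : X) := teq B dag w.

Lemma TE_step w t t' : T3 w t -> T3 w t' -> trel B dag w t t' -> TE w t t'.
Proof. intros; apply rst_step; auto. Qed.

Lemma R_teq q b p s : R (q, b, p) s -> forall v w, W2 v (q, b) -> wf v p w ->
  W2 w s /\ TE w (natmap B s) (q, b, p).
Proof.
  intro H. remember (q, b, p) as t eqn:Ht. revert q b p Ht.
  induction H as [q b | q b g p s HR IH | q b x p s Hx HR IH | q b x p d s Hx Hd Hdm HR IH];
    intros q0 b0 p0 Ht v w HW Hp; injection Ht as <- <- <-.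
  - destruct Hp as [<- _]. split; auto. apply rst_refl.
  - destruct Hp as [Hg [HvV Hp]].
    destruct (IH _ _ _ eq_refl v w (W2_ract v q b g HW Hg) Hp) as [IH1 IH2].
    split; auto. apply rst_trans with (q, ract b g, p); auto.
    destruct HW as [H1 [H2 H3]]; simpl in *.
    assert (Hg' : gidx g = rho (bidx b)) by congruence.
    apply TE_step.
    + unfold T3, wf3. rewrite bidx_ract by auto. rewrite H2. auto.
    + unfold T3, wf3. simpl. rewrite H2. auto.
    + constructor; auto.
  - destruct Hp as [Hxs Hp]. rewrite (vert_tgt x v) in Hp by auto.
    destruct (IH _ _ _ eq_refl v w HW Hp) as [IH1 IH2].
    split; auto. apply rst_trans with (q, b, p); auto.
    destruct HW as [H1 [H2 H3]]; simpl in *.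
    apply TE_step.
    + unfold T3, wf3. rewrite H2. auto.
    + unfold T3, wf3. simpl. rewrite H2. rewrite (vert_tgt x v) by auto. auto.
    + constructor. rewrite H2.
      pose proof (peq_ctx' X v v v w [LEdge x] [] [] p) as P. simpl in P. apply rst_sym, P; auto.
      * apply peq_basic. constructor; auto. simpl. rewrite (vert_tgt x v) by auto.
        split; auto. split; auto. eapply wf_start; eauto. simpl. split; auto. eapply wf_start; eauto.
      * simpl. split; auto. eapply wf_start; eauto.
  - destruct Hp as [Hxs Hp]. destruct d as [h e].
    pose proof Hd as Hd0. destruct Hd as [Hh [He1 He2]]; simpl in *.
    destruct HW as [H1 [H2 H3]]; simpl in *.
    assert (HL := lift_W2 _ x q (h, e) Hd0 H1 H3).
    destruct (IH _ _ _ eq_refl (gtgt x) w HL Hp) as [IH1 IH2].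
    split; auto. apply rst_trans with (lift q (h, e), p); auto.
    unfold lift in *; simpl in *. destruct HL as [HL1 [HL2 HL3]]; simpl in *.
    assert (Hb0 : lact h (bdown e) = b) by exact Hdm.
    assert (Hbe : bidx (bdown e) = bidx b) by (rewrite bidx_down; auto).
    assert (HeV : ~ isV (bidx e)) by (intro HH; apply Hx; rewrite <- He1; apply rhoV; auto).
    assert (Hqh : wf dag (q ++ [LElt h]) (lam (bidx b))).
    { apply wf_app with (lam (bidx b)); auto. simpl. split; auto.
      split; [apply lamV; auto|]. split; [auto|apply lamV; auto]. }
    assert (Tb : T3 w (q ++ [LElt h], bdown e, LEdge x :: p)).
    { unfold T3, wf3. rewrite Hbe, H2. simpl. auto. }
    apply rst_trans with ((q ++ [LElt h]) ++ [LEdge (lam (bidx e))], bdown (bbar e),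
                          LEdge (gbar X x) :: LEdge x :: p).
    + rewrite <- app_assoc. simpl. apply TE_step.
      * unfold T3, wf3. rewrite HL2. auto.
      * unfold T3, wf3. rewrite HL2. split; [exact HL1|]. split; [exact HL3|].
        simpl. split; [reflexivity|]. split; [unfold gtgt; rewrite gbarK; reflexivity|]. exact Hp.
      * constructor. rewrite HL2.
        pose proof (peq_ctx' X (gtgt x) (gtgt x) (gtgt x) w [LEdge (gbar X x); LEdge x] [] [] p) as P.
        simpl in P. apply rst_sym, P; auto.
        -- apply peq_basic. pattern x at 2; rewrite <- (gbarK X x). constructor.
           simpl. split; [unfold gtgt; auto|]. split; [unfold gtgt; rewrite gbarK; auto|].
           split; auto. apply tgt_isV. split; auto. apply tgt_isV.
        -- split; auto. apply tgt_isV.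
    + apply rst_sym, rst_trans with (q ++ [LElt h], bdown e, LEdge x :: p).
      * apply rst_sym. rewrite <- Hb0. apply TE_step; auto.
        -- unfold T3, wf3. simpl. rewrite bidx_lact, Hbe, H2 by congruence. auto.
        -- constructor. congruence.
      * assert (Tc : T3 w ((q ++ [LElt h]) ++ [LEdge (lam (bidx e))], bdown (bbar e),
                          LEdge (gbar X x) :: LEdge x :: p)).
        { rewrite <- app_assoc. unfold T3, wf3. rewrite HL2. split; [exact HL1|].
          split; [exact HL3|]. simpl. split; [reflexivity|].
          split; [unfold gtgt; rewrite gbarK; reflexivity|]. exact Hp. }
        apply TE_step; auto.
        replace (gbar X x) with (gbar X (rho (bidx e))) by (rewrite He1; auto).
        apply t_edge. auto.
Qed.


Lemma teq_R w t t' : TE w t t' -> T3 w t -> forall s s', R t s -> R t' s' -> E w s s'.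
Proof.
  intro H. induction H as [t t' [Ht [Ht' Hr]]| t | t t' H IH | t u t' H1 IH1 H2 IH2];
    intros HT s s' HR HR'.
  - destruct Hr as [q q' b p Hp | q b p p' Hp | q h b p Hh | q b g p Hg | q b p Hb].
    + destruct Ht as [H1 [H2 H3]].
      apply (key p (rho (bidx b)) w q b q' b s s'); auto.
      * split; auto.
      * apply E_left; auto. split; auto.
    + destruct Ht as [H1 [H2 H3]].
      apply (peq_resp (rho (bidx b)) w p p' Hp H3 q b s s'); auto. split; auto.
    + destruct Ht as [H1 [H2 H3]].
      apply (key p (rho (bidx b)) w (q ++ [LElt h]) b q (lact h b) s s'); auto.
      * split; auto.
      * apply E_lact; auto. split; auto.
    + destruct Ht as [H1 [H2 H3]]. apply R_elt_inv in HR'.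
      apply (key p (rho (bidx (ract b g))) w q (ract b g) q (ract b g) s s'); auto.
      * split; auto.
      * apply E_refl.
    + destruct Ht as [H1 [H2 H3]]. destruct Ht' as [H1' [H2' H3']].
      assert (HrV : ~ isV (rho (bidx b))) by (destruct LF as [Hs _]; apply Hs; auto).
      assert (HrV' : ~ isV (gbar X (rho (bidx b)))) by (intro HH; apply HrV, isV_of_bar; auto).
      destruct (R_edge_inv _ _ _ _ _ HrV' HR') as [d2 [Hd2 [Hdm2 HR2]]].
      set (lb := lam (bidx b)) in *.
      set (q1 := q ++ [LEdge lb]) in *.
      set (e' := bdown (bbar b)) in *.
      assert (Hv : rho (bidx (bdown b)) = gtgt (gbar X (rho (bidx b)))).
      { unfold gtgt. rewrite gbarK, bidx_down, rho_src. auto. }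
      set (v := rho (bidx (bdown b))) in *.
      set (d0 := (gone Y (lam (bidx e')), bbar b)).
      assert (Hd0v : lf_valid B (bidx e') (gbar X (rho (bidx b))) d0).
      { unfold d0, e'. split; [apply gidx_one|]; simpl.
        rewrite bidx_bar, rho_bar. split; auto. rewrite bidx_down, bidx_bar. auto. }
      assert (Hsrcx : gsrc X (gbar X (rho (bidx b))) = rho (bidx e')).
      { unfold e'. rewrite bidx_down, bidx_bar, rho_src, rho_bar. auto. }
      assert (E1 : E v (lift q1 d2) (lift q1 d0)).
      { rewrite Hv. apply lift_indep with (bidx e'); auto.
        apply decomp_eq; auto. rewrite Hdm2. unfold lf_map, d0; simpl.
        symmetry. apply lact1'. auto. }
      assert (HlbV : isV (lam (bidx e'))) by (apply lamV; auto).
      assert (Hbb : lam (bidx (bdown b)) = gsrc Y lb) by (unfold lb; rewrite bidx_down, lam_src; auto).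
      assert (E2 : E v (lift q1 d0) (q, bdown b)).
      { assert (HW0 : W2 v (lift q1 d0)).
        { rewrite Hv. apply lift_W2 with (bidx e'); auto. }
        unfold lift, d0 in *; simpl in *. rewrite bbarK in *.
        apply E_left; auto.
        apply rst_trans with (q1 ++ [LEdge (lam (bidx (bbar b)))]).
        - pose proof (peq_ctx' Y (lam (bidx e')) (lam (bidx e')) dag (lam (bidx (bdown b)))
            [LElt (gone Y (lam (bidx e')))] [] q1 [LEdge (lam (bidx (bbar b)))]) as P.
          simpl in P. apply P; [|exact H2'|].
          + apply peq_basic. constructor; auto. simpl; rewrite gidx_one; auto. simpl; auto.
          + simpl. unfold e'. rewrite bidx_down, lam_src. split; auto. split; [|apply tgt_isV].
            rewrite <- mor_tgt by apply blam_mor. unfold gtgt.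
            rewrite bidx_bar, gbarK, bidx_down. auto.
        - unfold q1. rewrite <- app_assoc. simpl.
          pose proof (peq_ctx' Y (gsrc Y lb) (gsrc Y lb) dag (lam (bidx (bdown b)))
            [LEdge lb; LEdge (lam (bidx (bbar b)))] [] q []) as P.
          rewrite !app_nil_r in P. simpl in P. apply P.
          + rewrite bidx_bar, lam_bar. fold lb. apply peq_basic. constructor.
            simpl. split; auto. unfold gtgt. rewrite gbarK. split; auto. split; auto. apply src_isV.
            simpl. split; auto. apply src_isV.
          + rewrite <- Hbb. auto.
          + simpl. rewrite Hbb. split; auto. apply src_isV. }
      apply (key p v w q (bdown b) (fst (lift q1 d2)) (snd (lift q1 d2)) s s'); auto.
      * split; auto.
      * apply E_sym, E_trans with (lift q1 d0); auto.
  - destruct t as [[q b] p]. destruct HT as [H1 [H2 H3]].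
    apply (key p (rho (bidx b)) w q b q b s s'); auto. split; auto. apply E_refl.
  - apply E_sym. apply IH; auto. apply (proj2 (crst_wf _ _ _ _ _ H)); auto.
  - assert (HTu : T3 w u) by (apply (proj1 (crst_wf _ _ _ _ _ H1)); auto).
    destruct u as [[q b] p]. destruct HTu as [H1' [H2' H3']].
    destruct (total p (rho (bidx b)) w q b H3') as [sm Hsm]. split; auto.
    apply E_trans with sm.
    + apply IH1; auto.
    + apply IH2; auto. split; auto.
Qed.

End Main.

Lemma seq2_teq (Y X : GoG) (B : GoB Y X) (dag : Y) (star : X) s s' :
  seq2 B dag star s s' -> teq B dag star (natmap B s) (natmap B s').
Proof.
  induction 1 as [s s' [Hs [Hs' Hr]]| | |].
  - apply rst_step. destruct s as [q b], s' as [q' b'].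
    destruct Hs as [H1 [H2 H3]], Hs' as [H1' [H2' H3']]; simpl in *.
    assert (Hst : isV star) by (rewrite <- H2; apply rhoV; auto).
    split; [|split].
    + unfold wf3; simpl. rewrite H2. auto.
    + unfold wf3; simpl. rewrite H2'. auto.
    + unfold natmap; simpl. destruct Hr; constructor; auto.
  - apply rst_refl.
  - apply rst_sym; auto.
  - eapply rst_trans; eauto.
Qed.

Theorem mainTheorem2 (Y X : GoG) (B : GoB Y X) (dag : Y) (star : X) :
  isV dag -> isV star -> left_fibrant B ->
  (forall t, wf3 B dag star t ->
     exists s, wf2 B dag star s /\ teq B dag star (natmap B s) t) /\
  (forall s s', wf2 B dag star s -> wf2 B dag star s' ->
     (teq B dag star (natmap B s) (natmap B s') <-> seq2 B dag star s s')).
Proof.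
  intros Hdag Hstar LF. split.
  - intros [[q b] p] Ht. destruct Ht as [H1 [H2 H3]].
    assert (HW : W2 Y X B dag (brho B (bidx b)) (q, b)) by (split; auto).
    destruct (total Y X B dag LF p _ star q b H3 HW) as [s Hs].
    destruct (R_teq Y X B dag q b p s Hs _ star HW H3) as [HW' HT].
    exists s. split; auto.
  - intros s s' Hs Hs'. split.
    + intro H. destruct s as [q b], s' as [q' b'].
      apply (teq_R Y X B dag LF star _ _ H).
      * destruct Hs as [H1 [H2 H3]]; simpl in *. split; auto. split; auto.
        simpl. split; [exact H2|]. apply rhoV; auto.
      * constructor.
      * constructor.
    + apply seq2_teq.
Qed.
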